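(* Let $G$ be a subgroup of $K^*$ and let $K^*$ act on the set of left cosets $K^*/G$ by ${}^{a}(bG)=(ab)G$. Then: (1) A function $f\colon K^*/G\to K$ is skew convex if and only if there exists a right $G$-linear map $\phi_f\colon K\to K$ such that $f(xG)=\phi_f(x)x^{-1}$ for all $x\in K^*$; such $\phi_f$ is unique. (2) The assignment $f\mapsto\phi_f$ is a ring isomorphism from $\mathcal S(K^*/G)$ onto the ring $\mathrm{End}(K_G)$ of right $G$-linear maps $K\to K$ (with pointwise addition and composition as multiplication).
   Context: Let $K$ be a skew field, $K^*=K\setminus\{0\}$. For a nonempty set $Z$ with a left $K^*$-action $(a,z)\mapsto{}^{a}z$, $\mathcal F(Z)$ is the set of functions $Z\to K$ with pointwise addition; the constant function with value $a\in K$ is denoted $a$. The skew product is $(f\diamond g)(z)=f({}^{g(z)}z)\,g(z)$ if $g(z)\neq0$ and $0$ if $g(z)=0$. A function $f$ is skew convex if $f\diamond(a+b)=f\diamond a+f\diamond b$ for all $a,b\in K$; $\mathcal S(Z)$ is the ring of skew-convex functions on $Z$ under pointwise addition and $\diamond$. A map $\phi\colon K\to K$ is right $G$-linear if $\phi(a-b)=\phi(a)-\phi(b)$ and $\phi(ac)=\phi(a)c$ for all $a,b\in K$, $c\in G$. *)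

(* Defs.v *)
From HB Require Import structures.
From mathcomp Require Import all_boot all_order all_algebra.
From Stdlib Require Import FunctionalExtensionality PropExtensionality.
Set Implicit Arguments. Unset Strict Implicit. Unset Printing Implicit Defensive.
Import GRing.Theory.
Local Open Scope ring_scope.

Definition skew_field (K : unitRingType) : Prop :=
  forall x : K, x != 0 -> x \is a GRing.unit.

Definition skew_prod (K : unitRingType) (Z : Type) (act : K -> Z -> Z)
  (f g : Z -> K) : Z -> K :=
  fun z => if g z == 0 then 0 else f (act (g z) z) * g z.

Definition skew_convex (K : unitRingType) (Z : Type) (act : K -> Z -> Z)
  (f : Z -> K) : Prop :=
  forall a b : K,
    skew_prod act f (fun _ => a + b) =
    (fun z => skew_prod act f (fun _ => a) z + skew_prod act f (fun _ => b) z).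

Record subgroup_units (K : unitRingType) (G : K -> Prop) : Prop := {
  sg_nz : forall x, G x -> x != 0;
  sg_1 : G 1;
  sg_mul : forall x y, G x -> G y -> G (x * y);
  sg_inv : forall x, G x -> G x^-1 }.

Definition right_G_linear (K : unitRingType) (G : K -> Prop) (phi : K -> K) : Prop :=
  (forall a b, phi (a - b) = phi a - phi b) /\
  (forall a c, G c -> phi (a * c) = phi a * c).

Definition lcoset (K : unitRingType) (G : K -> Prop) (x : K) : K -> Prop :=
  fun y => exists g, G g /\ y = x * g.

Record coset (K : unitRingType) (G : K -> Prop) := Coset {
  coset_set : K -> Prop;
  coset_ex : exists x : K, x != 0 /\ coset_set = lcoset G x }.

Definition mkcoset (K : unitRingType) (G : K -> Prop) (x : K) (hx : x != 0)
  : coset G := @Coset K G (lcoset G x) (ex_intro _ x (conj hx erefl)).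

Lemma coset_act_ex (K : unitRingType) (G : K -> Prop) (hK : skew_field K)
  (a : K) (C : coset G) :
  exists x : K, x != 0 /\
   (if a == 0 then coset_set C else fun y => exists z, coset_set C z /\ y = a * z)
   = lcoset G x.
Proof.
case: C => S [x [hx eS]] /=; rewrite eS.
case: eqP => [_|/eqP ha]; first by exists x.
exists (a * x); split.
  apply/eqP => h; move: (hK a ha) => ua.
  by move: hx; rewrite -(mulKr ua x) h mulr0 eqxx.
apply: functional_extensionality => y; apply: propositional_extensionality.
split.
  by move=> [z [[g [Gg ->]] ->]]; exists g; rewrite mulrA.
by move=> [g [Gg ->]]; exists (x * g); split; [exists g | rewrite mulrA].
Qed.

(* The action a(bG) = (ab)G of K^* on K^*/G (trivially extended to a = 0,
   where it is never used). *)
Definition coset_act (K : unitRingType) (G : K -> Prop) (hK : skew_field K)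
  (a : K) (C : coset G) : coset G :=
  @Coset K G _ (coset_act_ex hK a C).

(* Main.v *)
Require Import Defs.
From mathcomp Require Import all_boot all_order all_algebra.
From Stdlib Require Import ProofIrrelevance ClassicalEpsilon FunctionalExtensionality PropExtensionality.
Import GRing.Theory.
Local Open Scope ring_scope.
Set Implicit Arguments. Unset Strict Implicit.

Lemma coset_eq (K : unitRingType) (G : K -> Prop) (C1 C2 : coset G) :
  coset_set C1 = coset_set C2 -> C1 = C2.
Proof.
case: C1 => S1 p1; case: C2 => S2 p2 /= E; subst S2.
by rewrite (proof_irrelevance _ p1 p2).
Qed.

Lemma mulnz (K : unitRingType) (hK : skew_field K) (a b : K) :
  a != 0 -> b != 0 -> a * b != 0.
Proof.
move=> ha hb; apply/eqP => h; move: hb.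
by rewrite -(mulKr (hK a ha) b) h mulr0 eqxx.
Qed.

Lemma act_mk (K : unitRingType) (hK : skew_field K) (G : K -> Prop)
  (a x : K) (ha : a != 0) (hx : x != 0) (hax : a * x != 0) :
  coset_act hK a (mkcoset G hx) = mkcoset G hax.
Proof.
apply: coset_eq => /=; rewrite (negbTE ha).
apply: functional_extensionality => y; apply: propositional_extensionality.
split.
  by move=> [z [[g [Gg ->]] ->]]; exists g; rewrite mulrA.
by move=> [g [Gg ->]]; exists (x * g); split; [exists g | rewrite mulrA].
Qed.

Lemma lcosetG (K : unitRingType) (hK : skew_field K) (G : K -> Prop)
  (HG : subgroup_units G) (x c : K) : G c -> lcoset G (x * c) = lcoset G x.
Proof.
move=> Gc; have uc : c \is a GRing.unit := hK c (sg_nz HG Gc).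
apply: functional_extensionality => y; apply: propositional_extensionality.
split.
  by move=> [g [Gg ->]]; exists (c * g); split; [apply: sg_mul | rewrite mulrA].
move=> [g [Gg ->]]; exists (c^-1 * g); split.
  by apply: sg_mul => //; apply: sg_inv.
by rewrite -mulrA (mulVKr uc).
Qed.

Lemma mk_irr (K : unitRingType) (G : K -> Prop) (x : K) (h1 h2 : x != 0) :
  mkcoset G h1 = mkcoset G h2.
Proof. by rewrite (bool_irrelevance h1 h2). Qed.

Lemma coset_rep (K : unitRingType) (G : K -> Prop) (C : coset G) :
  exists x (hx : x != 0), C = mkcoset G hx.
Proof.
case: (coset_ex C) => x [hx e]; exists x, hx; exact: coset_eq.
Qed.

Lemma cos_ex (K : unitRingType) (G : K -> Prop) (x : K) :
  exists y : K, y != 0 /\ lcoset G (if x == 0 then 1 else x) = lcoset G y.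
Proof.
exists (if x == 0 then 1 else x); split => //.
by case: (eqVneq x 0) => [_|hx] //; apply: oner_neq0.
Qed.

Definition cos (K : unitRingType) (G : K -> Prop) (x : K) : coset G :=
  @Coset K G _ (cos_ex G x).

Lemma cosE (K : unitRingType) (G : K -> Prop) (x : K) (hx : x != 0) :
  cos G x = mkcoset G hx.
Proof. by apply: coset_eq => /=; rewrite (negbTE hx). Qed.

Definition phif (K : unitRingType) (G : K -> Prop) (f : coset G -> K) (x : K) : K :=
  if x == 0 then 0 else f (cos G x) * x.

Lemma phif0 (K : unitRingType) (G : K -> Prop) (f : coset G -> K) : phif f 0 = 0.
Proof. by rewrite /phif eqxx. Qed.

Lemma phifE (K : unitRingType) (hK : skew_field K) (G : K -> Prop)
  (f : coset G -> K) (x : K) (hx : x != 0) :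
  f (mkcoset G hx) = phif f x * x^-1.
Proof. by rewrite /phif (negbTE hx) (cosE G hx) mulrK //; apply: hK. Qed.

Lemma termE (K : unitRingType) (hK : skew_field K) (G : K -> Prop)
  (f : coset G -> K) (a x : K) (hx : x != 0) :
  skew_prod (coset_act hK) f (fun _ => a) (mkcoset G hx) = phif f (a * x) * x^-1.
Proof.
rewrite /skew_prod; case: eqP => [->|/eqP ha]; first by rewrite mul0r phif0 mul0r.
have hax := mulnz hK ha hx.
rewrite (act_mk hK G ha hx hax) /phif (negbTE hax) (cosE G hax).
by rewrite mulrA mulrK //; apply: hK.
Qed.

Lemma sub_phi0 (K : unitRingType) (phi : K -> K) :
  (forall a b, phi (a - b) = phi a - phi b) -> phi 0 = 0.
Proof.
move=> h; have := h 0 0; rewrite [0 - 0]subrr => E.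
by rewrite {1}E subrr.
Qed.

Lemma phi_uniq (K : unitRingType) (hK : skew_field K) (G : K -> Prop)
  (f : coset G -> K) (phi : K -> K) :
  right_G_linear G phi ->
  (forall (x : K) (hx : x != 0), f (mkcoset G hx) = phi x * x^-1) ->
  phi = phif f.
Proof.
move=> [hsub _] hrep; apply: functional_extensionality => x.
rewrite /phif; case: eqP => [->|/eqP hx].
  exact: sub_phi0.
by rewrite (cosE G hx) hrep mulrVK //; apply: hK.
Qed.

Lemma add_of_sub (K : unitRingType) (phi : K -> K) :
  (forall a b, phi (a - b) = phi a - phi b) ->
  forall a b, phi (a + b) = phi a + phi b.
Proof.
move=> h a b.
have h0 : phi 0 = 0 by exact: sub_phi0.
have hN : phi (- b) = - phi b by rewrite -sub0r h h0 sub0r.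
by have := h a (- b); rewrite opprK hN opprK.
Qed.

Lemma convex_phif (K : unitRingType) (hK : skew_field K) (G : K -> Prop)
  (f : coset G -> K) :
  skew_convex (coset_act hK) f <-> (forall a b, phif f (a + b) = phif f a + phif f b).
Proof.
split.
  move=> hc a b; have := congr1 (fun h => h (mkcoset G (oner_neq0 K))) (hc a b).
  by rewrite /= !termE !mulr1 invr1 !mulr1.
move=> hadd a b; apply: functional_extensionality => C.
case: (coset_rep C) => x [hx ->].
by rewrite !termE mulrDl hadd mulrDl.
Qed.

Lemma Glin_phif (K : unitRingType) (hK : skew_field K) (G : K -> Prop)
  (HG : subgroup_units G) (f : coset G -> K) :
  skew_convex (coset_act hK) f -> right_G_linear G (phif f).
Proof.
move=> /convex_phif hadd; split.
  move=> a b; rewrite hadd.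
  have : phif f b + phif f (- b) = 0 by rewrite -hadd subrr phif0.
  by move/eqP; rewrite addrC addr_eq0 => /eqP ->.
move=> a c Gc; have hc := sg_nz HG Gc.
rewrite /phif; case: (eqVneq a 0) => [->|ha]; first by rewrite ?mul0r ?eqxx ?mul0r.
have hac := mulnz hK ha hc.
rewrite (negbTE hac) (cosE G hac) (cosE G ha) mulrA.
congr (f _ * _ * _); apply: coset_eq => /=; exact: lcosetG.
Qed.

Theorem proposition2p7 (K : unitRingType) (hK : skew_field K)
  (G : K -> Prop) (HG : subgroup_units G) :
  (* (1) characterization and uniqueness of phi_f *)
  (forall f : coset G -> K,
     skew_convex (coset_act hK) f <->
     exists phi : K -> K, right_G_linear G phi /\
       forall (x : K) (hx : x != 0), f (mkcoset G hx) = phi x * x^-1) /\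
  (forall f : coset G -> K, skew_convex (coset_act hK) f ->
     forall phi1 phi2 : K -> K,
       right_G_linear G phi1 ->
       (forall (x : K) (hx : x != 0), f (mkcoset G hx) = phi1 x * x^-1) ->
       right_G_linear G phi2 ->
       (forall (x : K) (hx : x != 0), f (mkcoset G hx) = phi2 x * x^-1) ->
       phi1 = phi2) /\
  (* (2) f |-> phi_f is a ring isomorphism S(K^*/G) -> End(K_G) *)
  (exists Phi : (coset G -> K) -> (K -> K),
     (forall f, skew_convex (coset_act hK) f ->
        right_G_linear G (Phi f) /\
        forall (x : K) (hx : x != 0), f (mkcoset G hx) = Phi f x * x^-1) /\
     (forall f g, skew_convex (coset_act hK) f -> skew_convex (coset_act hK) g ->
        Phi (fun z => f z + g z) = (fun x => Phi f x + Phi g x)) /\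
     (forall f g, skew_convex (coset_act hK) f -> skew_convex (coset_act hK) g ->
        Phi (skew_prod (coset_act hK) f g) = (fun x => Phi f (Phi g x))) /\
     Phi (fun _ => 1) = (fun x => x) /\
     (forall f g, skew_convex (coset_act hK) f -> skew_convex (coset_act hK) g ->
        Phi f = Phi g -> f = g) /\
     (forall phi, right_G_linear G phi ->
        exists f, skew_convex (coset_act hK) f /\ Phi f = phi)).
Proof.
have back : forall f : coset G -> K, (exists phi : K -> K, right_G_linear G phi /\
       forall (x : K) (hx : x != 0), f (mkcoset G hx) = phi x * x^-1) ->
       skew_convex (coset_act hK) f.
  move=> f [phi [hl hr]]; apply/convex_phif.
  rewrite -(phi_uniq hK hl hr); apply: add_of_sub; exact: hl.1.
split.
  move=> f; split => [hc|]; last exact: back.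
  exists (phif f); split; [exact: Glin_phif | exact: phifE].
split.
  move=> f _ p1 p2 l1 r1 l2 r2.
  by rewrite (phi_uniq hK l1 r1) (phi_uniq hK l2 r2).
exists (@phif K G); split.
  move=> f hc; split; [exact: Glin_phif | exact: phifE].
split.
  move=> f g _ _; apply: functional_extensionality => x.
  rewrite /phif; case: eqP => _; [by rewrite addr0 | by rewrite mulrDl].
split.
  move=> f g _ _; apply: functional_extensionality => x.
  rewrite /phif; case: (eqVneq x 0) => [_|hx]; first by rewrite /= eqxx.
  rewrite /skew_prod.
  case: (eqVneq (g (cos G x)) 0) => [hc0|hc]; first by rewrite ?hc0 ?mul0r ?eqxx.
  have hcx := mulnz hK hc hx.
  rewrite (negbTE hcx); move: hc hcx; rewrite (cosE G hx) => hc hcx.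
  by rewrite (act_mk hK G hc hx hcx) (cosE G hcx) mulrA.
split.
  apply: functional_extensionality => x.
  by rewrite /phif; case: eqP => [->|]; rewrite ?mul1r.
split.
  move=> f g _ _ E; apply: functional_extensionality => C.
  case: (coset_rep C) => x [hx ->].
  by rewrite !(phifE hK f) !(phifE hK g) E.
move=> phi hl.
pose r (C : coset G) := proj1_sig (constructive_indefinite_description _ (coset_ex C)).
have rP : forall C, r C != 0 /\ coset_set C = lcoset G (r C).
  move=> C; exact: (proj2_sig (constructive_indefinite_description _ (coset_ex C))).
pose f (C : coset G) := phi (r C) * (r C)^-1.
have hr : forall (x : K) (hx : x != 0), f (mkcoset G hx) = phi x * x^-1.
  move=> x hx; rewrite /f; case: (rP (mkcoset G hx)) => hz /= E.
  have : lcoset G (r (mkcoset G hx)) (r (mkcoset G hx)).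
    by exists 1; split; [exact: sg_1 | rewrite mulr1].
  rewrite -E => -[g [Gg ->]].
  have ug : g \is a GRing.unit := hK g (sg_nz HG Gg).
  have ux : x \is a GRing.unit := hK x hx.
  by rewrite hl.2 // invrM // mulrA mulrK.
exists f; split.
  by apply: back; exists phi.
by rewrite -(phi_uniq hK hl hr).
Qed.
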